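(* Let $0<q<1$, let $n,i$ be integers with $1\le i\le n$, and let $x\in[0,1]$. Then $$\frac{1}{([1-x]_q+[x]_q)^{n-i}}\sum_{k=i-1}^n\frac{\binom{k}{i}}{\binom{n}{i}}B_{k,n}(x,q)=[x]_q^i.$$
   Context: Let $q$ be a real number with $0<q<1$. For real $x$, the $q$-number is $[x]_q=\frac{1-q^x}{1-q}$. For a nonnegative integer $k$ and $x\in[0,1]$, the modified $q$-Bernstein polynomials $B_{k,n}(x,q)$, $n=0,1,2,\dots$, are defined by the generating function $$\frac{t^k e^{[1-x]_q t}[x]_q^k}{k!}=\sum_{n=0}^\infty B_{k,n}(x,q)\frac{t^n}{n!}.$$ Here $\binom{k}{i}=0$ when $k<i$. *)

(* Defs.v *)
From Stdlib Require Import Reals Lra Lia Factorial.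
From Coquelicot Require Import Coquelicot.
From Stdlib Require Import Reals Lra Lia Factorial.
Open Scope R_scope.

Definition qnum (q x : R) : R := (1 - Rpower q x) / (1 - q).

Definition binom (k i : nat) : R := if Nat.leb i k then C k i else 0.

(* Modified q-Bernstein polynomial B_{k,n}(x,q): n! times the coefficient of
   t^n in  t^k e^{[1-x]_q t} [x]_q^k / k!  (see gen_B below). *)
Definition B (k n : nat) (x q : R) : R :=
  binom n k * qnum q x ^ k * qnum q (1 - x) ^ (n - k).

Lemma pown_R (t : R) (m : nat) : @pow_n (AbsRing.Ring R_AbsRing) t m = t ^ m.
Proof. induction m as [|m IH]. reflexivity. simpl. rewrite IH. reflexivity. Qed.

Lemma gen_B (k : nat) (x q t : R) :
  is_pseries (fun n => B k n x q / INR (fact n)) t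
    (t ^ k * exp (qnum q (1 - x) * t) * qnum q x ^ k / INR (fact k)).
Proof.
set (a := qnum q (1 - x)). set (b := qnum q x).
assert (He : is_pseries (fun m => a ^ m / INR (fact m)) t (exp (a * t))).
{ pose proof (is_exp_Reals (a * t)) as H. unfold is_pseries in *.
  eapply is_series_ext; [|exact H]. intro m. simpl.
  rewrite !pow_n_pow. change (scal ?u ?v) with (mult u v). unfold mult; simpl.
  rewrite Rpow_mult_distr. transitivity (t ^ m * (a ^ m / INR (fact m))); [unfold Rdiv; ring|]. f_equal; symmetry; apply pown_R. }
pose proof (is_pseries_incr_n _ k _ _ He) as H1.
pose proof (is_pseries_scal (b ^ k / INR (fact k)) _ _ _ (Rmult_comm _ _) H1) as H2.
eapply is_pseries_ext; last first.
{ replace (t ^ k * exp (a * t) * b ^ k / INR (fact k)) with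
     (scal (b ^ k / INR (fact k)) (scal (pow_n t k) (exp (a * t)))).
  exact H2. change (scal ?u ?v) with (mult u v). unfold mult; simpl.
  transitivity (b ^ k / INR (fact k) * (t ^ k * exp (a * t))); [|unfold Rdiv; ring].
  f_equal; try (change (scal ?u ?v) with (mult u v); unfold mult; simpl; f_equal; apply pown_R). }
intro n. unfold PS_scal. rewrite PS_incr_n_simplify.
change (scal ?u ?v) with (mult u v). unfold mult; simpl.
unfold B, binom. destruct (Nat.leb_spec k n) as [Hkn|Hkn].
- destruct (Compare_dec.le_lt_dec k n) as [Hc|Hc]; [|lia].
  fold a b. unfold C.
  field. repeat split; apply INR_fact_neq_0.
- destruct (Compare_dec.le_lt_dec k n) as [Hc|Hc]; [lia|]. change (zero : R) with 0. lra.
Qed.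

(* Main.v *)
Require Import Defs.
From Stdlib Require Import Reals.
From Coquelicot Require Import Coquelicot.
From Stdlib Require Import Reals Lra Lia.
Open Scope R_scope.

Lemma qnum_nonneg q y : 0 < q < 1 -> 0 <= y -> 0 <= qnum q y.
Proof.
  intros Hq Hy. unfold qnum, Rpower.
  assert (Hl : ln q < 0) by (rewrite <- ln_1; apply ln_increasing; lra).
  assert (exp (y * ln q) <= 1).
  { rewrite <- exp_0. destruct (Req_dec y 0) as [->|Hy0].
    - rewrite Rmult_0_l; lra.
    - left; apply exp_increasing. nra. }
  apply Rmult_le_pos; [lra|]. left; apply Rinv_0_lt_compat; lra.
Qed.

Lemma qnum_pos q y : 0 < q < 1 -> 0 < y -> 0 < qnum q y.
Proof.
  intros Hq Hy. unfold qnum, Rpower.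
  assert (Hl : ln q < 0) by (rewrite <- ln_1; apply ln_increasing; lra).
  assert (exp (y * ln q) < 1).
  { rewrite <- exp_0. apply exp_increasing. nra. }
  apply Rmult_lt_0_compat; [lra|]. apply Rinv_0_lt_compat; lra.
Qed.

Lemma comb_id n i j : (i + j <= n)%nat ->
  C (j + i) i / C n i * C n (j + i) = C (n - i) j.
Proof.
  intro H. unfold C.
  replace (j + i - i)%nat with j by lia.
  replace (n - (j + i))%nat with (n - i - j)%nat by lia.
  assert (F := INR_fact_neq_0).
  field. repeat split; auto.
Qed.

Theorem theorem7 (q x : R) (n i : nat) :
  0 < q < 1 -> (1 <= i <= n)%nat -> 0 <= x <= 1 ->
  / (qnum q (1 - x) + qnum q x) ^ (n - i) *
    sum_f (i - 1) n (fun k => binom k i / binom n i * B k n x q)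
  = qnum q x ^ i.
Proof.
  intros Hq Hi Hx.
  set (a := qnum q (1 - x)). set (b := qnum q x).
  assert (Hab : 0 < a + b).
  { assert (0 <= a) by (apply qnum_nonneg; lra).
    assert (0 <= b) by (apply qnum_nonneg; lra).
    destruct (Rlt_or_le 0 x).
    - assert (0 < b) by (apply qnum_pos; lra). lra.
    - assert (0 < a) by (apply qnum_pos; lra). lra. }
  set (m := (n - i)%nat).
  assert (Hs : sum_f (i - 1) n (fun k => binom k i / binom n i * B k n x q)
             = b ^ i * (b + a) ^ m).
  { unfold sum_f. replace (n - (i - 1))%nat with (S m) by (unfold m; lia).
    rewrite decomp_sum by lia. simpl Init.Nat.pred.
    replace (binom (0 + (i - 1)) i) with 0.
    2:{ unfold binom. replace (Nat.leb i (0 + (i-1))) with false; [reflexivity|].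
        symmetry; apply Nat.leb_gt; lia. }
    rewrite binomial, scal_sum.
    unfold Rdiv at 1. rewrite !Rmult_0_l, Rplus_0_l.
    apply sum_eq. intros j Hj.
    replace (S j + (i - 1))%nat with (j + i)%nat by lia.
    unfold B, binom.
    replace (Nat.leb i (j + i)) with true by (symmetry; apply Nat.leb_le; lia).
    replace (Nat.leb i n) with true by (symmetry; apply Nat.leb_le; lia).
    replace (Nat.leb (j + i) n) with true by (symmetry; apply Nat.leb_le; unfold m in Hj; lia).
    fold a b.
    replace (n - (j + i))%nat with (m - j)%nat by (unfold m; lia).
    unfold m; rewrite <- (comb_id n i j) by (unfold m in Hj; lia).
    rewrite pow_add. fold m. field. unfold C; assert (F:=INR_fact_neq_0); unfold Rdiv; apply Rmult_integral_contrapositive_currified; [auto|apply Rinv_neq_0_compat, Rmult_integral_contrapositive_currified; auto]. }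
  rewrite Hs. rewrite (Rplus_comm b a). field.
  apply pow_nonzero. lra.
Qed.
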